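(* Call a group a generalized torsion group if every non-trivial element of it is a generalized torsion element. Then: (i) every quotient of a generalized torsion group is a generalized torsion group; (ii) the direct limit of a directed system of generalized torsion groups is a generalized torsion group; (iii) if $1\to K\to G\to Q\to 1$ is an exact sequence of groups with $K$ and $Q$ generalized torsion groups, then $G$ is a generalized torsion group; (iv) there exists a generalized torsion group having a subgroup which is not a generalized torsion group.
   Context: For $g,x$ in a group, $g^{x}:=xgx^{-1}$. A non-trivial element $g$ of a group $G$ is a generalized torsion element if there exist a positive integer $n$ and $x_1,\ldots,x_n\in G$ with $g^{x_1}g^{x_2}\cdots g^{x_n}=1$. *)

(* Defs.v *)
From Stdlib Require Import List.
Import ListNotations.

Record Group : Type := {
  carrier :> Type;
  gmul : carrier -> carrier -> carrier;
  gone : carrier;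
  ginv : carrier -> carrier;
  gmul_assoc : forall x y z, gmul x (gmul y z) = gmul (gmul x y) z;
  gmul_1l : forall x, gmul gone x = x;
  gmul_1r : forall x, gmul x gone = x;
  gmul_Vl : forall x, gmul (ginv x) x = gone;
  gmul_Vr : forall x, gmul x (ginv x) = gone
}.

Arguments gmul {g} _ _.
Arguments gone {g}.
Arguments ginv {g} _.

Definition gconj {G : Group} (g x : G) : G := gmul (gmul x g) (ginv x).

Definition gprod {G : Group} (l : list G) : G := fold_right gmul gone l.

Definition gen_torsion_elt {G : Group} (g : G) : Prop :=
  g <> gone /\
  exists xs : list G, xs <> [] /\ gprod (map (gconj g) xs) = gone.

Definition gen_torsion_group (G : Group) : Prop :=
  forall g : G, g <> gone -> gen_torsion_elt g.

Definition is_hom {G H : Group} (f : G -> H) : Prop :=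
  forall x y : G, f (gmul x y) = gmul (f x) (f y).

Record directed_system (I : Type) (le : I -> I -> Prop)
    (G : I -> Group) (phi : forall i j, le i j -> G i -> G j) : Prop := {
  ds_inhabited : inhabited I;
  ds_refl : forall i, le i i;
  ds_trans : forall i j k, le i j -> le j k -> le i k;
  ds_directed : forall i j, exists k, le i k /\ le j k;
  ds_hom : forall i j (h : le i j), is_hom (phi i j h);
  ds_id : forall i (h : le i i) (x : G i), phi i i h x = x;
  ds_comp : forall i j k (hij : le i j) (hjk : le j k) (hik : le i k) (x : G i),
      phi j k hjk (phi i j hij x) = phi i k hik x
}.

(* (L, f) is a direct limit of the directed system: the f_i are compatible
   homomorphisms, L is the union of their images, and two elements are
   identified in L exactly when they become equal at some later stage
   (the standard description L = (disjoint union of the G_i) / ~). *)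
Record is_direct_limit (I : Type) (le : I -> I -> Prop)
    (G : I -> Group) (phi : forall i j, le i j -> G i -> G j)
    (L : Group) (f : forall i, G i -> L) : Prop := {
  dl_hom : forall i, is_hom (f i);
  dl_compat : forall i j (h : le i j) (x : G i), f j (phi i j h x) = f i x;
  dl_cover : forall y : L, exists i (x : G i), f i x = y;
  dl_ident : forall i j (x : G i) (y : G j), f i x = f j y ->
      exists k (hik : le i k) (hjk : le j k), phi i k hik x = phi j k hjk y
}.

(* Main.v *)
Require Import Defs.
From Stdlib Require Import List ZArith Lia Classical Bool.
Import ListNotations.

Section GL.
Variable G : Group.

Lemma inv_uniq (a b : G) : gmul a b = gone -> b = ginv a.
Proof.
  intro H. rewrite <- (gmul_1l G b), <- (gmul_Vl G a), <- gmul_assoc, H, gmul_1r. reflexivity.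
Qed.

Lemma inv_mul (a b : G) : ginv (gmul a b) = gmul (ginv b) (ginv a).
Proof.
  symmetry. apply inv_uniq.
  rewrite <- gmul_assoc, (gmul_assoc G b), gmul_Vr, gmul_1l, gmul_Vr. reflexivity.
Qed.

Lemma gprod_app (l1 l2 : list G) : gprod (l1 ++ l2) = gmul (gprod l1) (gprod l2).
Proof.
  induction l1; simpl. now rewrite gmul_1l. now rewrite IHl1, gmul_assoc.
Qed.

Lemma gprod_concat (L : list (list G)) : gprod (concat L) = gprod (map gprod L).
Proof.
  induction L; simpl. reflexivity. now rewrite gprod_app, IHL.
Qed.

Lemma conj_mul (a b y : G) : gconj (gmul a b) y = gmul (gconj a y) (gconj b y).
Proof.
  unfold gconj. rewrite !gmul_assoc.
  rewrite <- (gmul_assoc G _ (ginv y) y), gmul_Vl, gmul_1r. reflexivity.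
Qed.

Lemma conj_one (y : G) : gconj gone y = gone.
Proof. unfold gconj. now rewrite gmul_1r, gmul_Vr. Qed.

Lemma conj_prod (l : list G) y : gconj (gprod l) y = gprod (map (fun a => gconj a y) l).
Proof.
  induction l; simpl. apply conj_one. now rewrite conj_mul, IHl.
Qed.

Lemma conj_conj (g x y : G) : gconj (gconj g x) y = gconj g (gmul y x).
Proof.
  unfold gconj. rewrite inv_mul, !gmul_assoc. reflexivity.
Qed.
End GL.

Section Hom.
Variables G H : Group.
Variable h : G -> H.
Hypothesis hh : is_hom h.

Lemma hom_one : h gone = gone.
Proof.
  assert (E : gmul (h gone) (h gone) = h gone) by now rewrite <- hh, gmul_1l.
  transitivity (gmul (ginv (h gone)) (gmul (h gone) (h gone))).
  - now rewrite gmul_assoc, gmul_Vl, gmul_1l.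
  - now rewrite E, gmul_Vl.
Qed.

Lemma hom_inv x : h (ginv x) = ginv (h x).
Proof. apply inv_uniq. now rewrite <- hh, gmul_Vr, hom_one. Qed.

Lemma hom_conj g x : h (gconj g x) = gconj (h g) (h x).
Proof. unfold gconj. now rewrite !hh, hom_inv. Qed.

Lemma hom_prod l : h (gprod l) = gprod (map h l).
Proof. induction l; simpl. apply hom_one. now rewrite hh, IHl. Qed.

Lemma map_torsion g xs : gprod (map (gconj g) xs) = gone ->
  gprod (map (gconj (h g)) (map h xs)) = gone.
Proof.
  intro E. rewrite map_map.
  replace (map (fun x => gconj (h g) (h x)) xs) with (map h (map (gconj g) xs)).
  - now rewrite <- hom_prod, E, hom_one.
  - rewrite map_map. apply map_ext. intro; apply hom_conj.
Qed.

Lemma hom_gt g : h g <> gone -> gen_torsion_elt g -> gen_torsion_elt (h g).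
Proof.
  intros ne [_ [xs [nx E]]]. split; auto. exists (map h xs). split.
  - destruct xs; simpl; congruence.
  - now apply map_torsion.
Qed.
End Hom.

Lemma lift_list (G Q : Group) (p : G -> Q) :
  (forall q, exists g, p g = q) -> forall qs, exists xs, map p xs = qs.
Proof.
  intros S qs. induction qs as [|q qs IH]. exists []; reflexivity.
  destruct IH as [xs E]. destruct (S q) as [g Eg]. exists (g :: xs). simpl; congruence.
Qed.

(* infinite dihedral group *)
Definition dmul (a b : Z * bool) : Z * bool :=
  let (n, x) := a in let (m, y) := b in ((n + if x then - m else m)%Z, xorb x y).
Definition dinv (a : Z * bool) : Z * bool :=
  let (n, x) := a in ((if x then n else - n)%Z, x).

Definition Dinf : Group.
Proof.
  refine (@Build_Group (Z * bool) dmul (0%Z, false) dinv _ _ _ _ _).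
  - intros [n x] [m y] [k z]; destruct x, y, z; simpl; f_equal; lia.
  - intros [n x]; destruct x; simpl; f_equal; lia.
  - intros [n x]; destruct x; simpl; f_equal; lia.
  - intros [n x]; destruct x; simpl; f_equal; lia.
  - intros [n x]; destruct x; simpl; f_equal; lia.
Defined.

Definition Zg : Group.
Proof.
  refine (@Build_Group Z Z.add 0%Z Z.opp _ _ _ _ _); intros; lia.
Defined.

Lemma Zg_prod (xs : list Zg) : gprod (map (gconj (1%Z : Zg)) xs) = Z.of_nat (length xs).
Proof.
  induction xs. reflexivity.
  change (gprod (map (gconj (1%Z:Zg)) (a::xs))) with
    (gmul (gconj (1%Z:Zg) a) (gprod (map (gconj (1%Z:Zg)) xs))).
  rewrite IHxs. unfold gconj; simpl. lia.
Qed.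

Theorem theorem3p2 :
  (* (i) quotients (= surjective homomorphic images) *)
  (forall (G Q : Group) (p : G -> Q),
      is_hom p -> (forall q : Q, exists g : G, p g = q) ->
      gen_torsion_group G -> gen_torsion_group Q) /\
  (* (ii) direct limits of directed systems *)
  (forall (I : Type) (le : I -> I -> Prop) (G : I -> Group)
          (phi : forall i j, le i j -> G i -> G j) (L : Group)
          (f : forall i, G i -> L),
      directed_system I le G phi -> is_direct_limit I le G phi L f ->
      (forall i, gen_torsion_group (G i)) -> gen_torsion_group L) /\
  (* (iii) extensions: 1 -> K -> G -> Q -> 1 exact *)
  (forall (K G Q : Group) (i : K -> G) (p : G -> Q),
      is_hom i -> is_hom p ->
      (forall a b : K, i a = i b -> a = b) ->
      (forall q : Q, exists g : G, p g = q) ->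
      (forall g : G, p g = gone <-> exists k : K, i k = g) ->
      gen_torsion_group K -> gen_torsion_group Q -> gen_torsion_group G) /\
  (* (iv) a generalized torsion group with a subgroup (= injective
     homomorphic copy) that is not a generalized torsion group *)
  (exists (G H : Group) (j : H -> G),
      is_hom j /\ (forall a b : H, j a = j b -> a = b) /\
      gen_torsion_group G /\ ~ gen_torsion_group H).
Proof.
  split; [|split; [|split]].
  - intros G Q p hp S T q nq. destruct (S q) as [g <-].
    apply hom_gt; auto. apply T. intro E; subst g. apply nq. apply hom_one; auto.
  - intros I le G phi L f _ DL T y ny.
    destruct (dl_cover _ _ _ _ _ _ DL y) as [i [x <-]].
    apply hom_gt; [apply (dl_hom _ _ _ _ _ _ DL)|auto|].
    apply T. intro E; subst x. apply ny. apply hom_one, (dl_hom _ _ _ _ _ _ DL).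
  - intros K G Q i p hi hp inj S ex TK TQ g ng.
    destruct (classic (p g = gone)) as [E|E].
    + destruct (proj1 (ex g) E) as [k <-].
      apply hom_gt; auto. apply TK. intro Ek; subst k. apply ng, hom_one; auto.
    + destruct (TQ _ E) as [_ [qs [nqs Eq]]].
      destruct (lift_list G Q p S qs) as [xs Exs].
      set (w := gprod (map (gconj g) xs)).
      assert (pw : p w = gone).
      { unfold w. rewrite hom_prod, map_map by auto.
        rewrite <- Eq, <- Exs, map_map. f_equal. apply map_ext. intro; apply hom_conj; auto. }
      assert (nxs : xs <> []) by (destruct xs; simpl in Exs; congruence).
      split; auto.
      destruct (proj1 (ex w) pw) as [k Ek].
      destruct (classic (k = gone)) as [k1|k1].
      * exists xs. split; auto. fold w. rewrite <- Ek, k1. apply hom_one; auto.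
      * destruct (TK k k1) as [_ [ks [nks Eks]]].
        pose proof (map_torsion _ _ i hi k ks Eks) as Ei. rewrite Ek in Ei.
        set (ys := map i ks) in *.
        exists (concat (map (fun y => map (gmul y) xs) ys)). split.
        { destruct ks as [|a ks]; [congruence|]. destruct xs as [|b xs]; [congruence|].
          simpl. discriminate. }
        rewrite concat_map, map_map, gprod_concat, <- Ei, map_map.
        f_equal. apply map_ext. intro y. unfold w.
        rewrite conj_prod, map_map, map_map. f_equal. apply map_ext. intro x.
        symmetry. apply conj_conj.
  - exists Dinf, Zg, (fun n => (n, false)). split; [|split; [|split]].
    + intros a b. reflexivity.
    + intros a b E. congruence.
    + intros [n x] ng. split; auto. destruct x.
      * exists [(0%Z, false); (0%Z, false)]. split. discriminate.
        simpl. f_equal. lia.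
      * exists [(0%Z, false); (0%Z, true)]. split. discriminate.
        simpl. f_equal. lia.
    + intro T. destruct (T (1%Z : Zg)) as [_ [xs [nxs E]]].
      { simpl. discriminate. }
      rewrite Zg_prod in E. simpl in E. destruct xs; [congruence|]. simpl in E. lia.
Qed.
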